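(* Let $(X,d)$ be a locally compact noncompact Polish space with compatible metric $d$, $A$ a nonzero C*-algebra, and $Y_n\subseteq X$ ($n\in\mathbb N$) infinite, compact, pairwise disjoint sets such that no compact subset of $X$ meets infinitely many $Y_n$. Let $\phi_n\in\mathrm{Homeo}_\partial(Y_n)$ for each $n$, let $\tilde\psi\in\mathrm{Aut}(Q(X,A))$ be canonically determined by $\{\phi_n\}$, and let $f\in\mathbb N^{\mathbb N}$. If $r(\phi_n)\ge n/f(n)$ for infinitely many $n$, then there is $c\in C_f$ with $\tilde\psi(c)\neq c$.
   Context: For closed $Y\subseteq X$, $\partial_X Y=Y\cap\overline{X\setminus Y}$ and $\mathrm{Homeo}_\partial(Y)$ is the group of homeomorphisms of $Y$ fixing every point of $\partial_XY$. Given $\phi_n\in\mathrm{Homeo}_\partial(Y_n)$ for all $n$, let $\tilde\phi$ be the homeomorphism of $X$ equal to $\phi_n$ on $Y_n$ and to the identity off $\bigcup_n Y_n$; then $\psi(g)=g\circ\tilde\phi$ defines an automorphism of $C_b(X,A)$ preserving $C_0(X,A)$, and the induced automorphism $\tilde\psi$ of $Q(X,A)=C_b(X,A)/C_0(X,A)$ is said to be canonically determined by $\{\phi_n\}$. The radius of $\phi_n$ is $r(\phi_n)=\sup_{x\in Y_n}d(x,\phi_n(x))$. $\mathbb N^{\mathbb N}$ is the set of $f\colon\mathbb N\to\mathbb N$ with all values positive; $\pi\colon C_b(X,A)\to Q(X,A)$ is the quotient map; $D_f=\{g\in C_b(X,A)\mid\forall\epsilon>0\ \exists n_0\ \forall n\ge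 n_0\ \forall x,y\in Y_n\ (d(x,y)<1/f(n)\Rightarrow\|g(x)-g(y)\|<\epsilon)\}$ and $C_f=\pi(D_f)$. *)

(* Defs.v *)
From Stdlib Require Import Reals Lra Lia List Classical ClassicalEpsilon.
Open Scope R_scope.

Definition Cx := (R * R)%type.
Definition Cadd (z w : Cx) : Cx := (fst z + fst w, snd z + snd w).
Definition Cmul (z w : Cx) : Cx :=
  (fst z * fst w - snd z * snd w, fst z * snd w + snd z * fst w).
Definition Cconj (z : Cx) : Cx := (fst z, - snd z).
Definition Cone : Cx := (1, 0).
Definition Cmod (z : Cx) : R := sqrt (fst z * fst z + snd z * snd z).

Record CStarAlgebra := {
  ca :> Type;
  czero : ca;
  cadd : ca -> ca -> ca;
  copp : ca -> ca;
  cmul : ca -> ca -> ca;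
  cscal : Cx -> ca -> ca;
  cstar : ca -> ca;
  cnorm : ca -> R;
  cadd_assoc : forall a b c, cadd a (cadd b c) = cadd (cadd a b) c;
  cadd_comm : forall a b, cadd a b = cadd b a;
  cadd_0 : forall a, cadd a czero = a;
  cadd_opp : forall a, cadd a (copp a) = czero;
  cscal_1 : forall a, cscal Cone a = a;
  cscal_mul : forall z w a, cscal (Cmul z w) a = cscal z (cscal w a);
  cscal_addl : forall z w a, cscal (Cadd z w) a = cadd (cscal z a) (cscal w a);
  cscal_addr : forall z a b, cscal z (cadd a b) = cadd (cscal z a) (cscal z b);
  cmul_assoc : forall a b c, cmul a (cmul b c) = cmul (cmul a b) c;
  cmul_addl : forall a b c, cmul (cadd a b) c = cadd (cmul a c) (cmul b c);
  cmul_addr : forall a b c, cmul a (cadd b c) = cadd (cmul a b) (cmul a c);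
  cmul_scall : forall z a b, cmul (cscal z a) b = cscal z (cmul a b);
  cmul_scalr : forall z a b, cmul a (cscal z b) = cscal z (cmul a b);
  cstar_inv : forall a, cstar (cstar a) = a;
  cstar_add : forall a b, cstar (cadd a b) = cadd (cstar a) (cstar b);
  cstar_scal : forall z a, cstar (cscal z a) = cscal (Cconj z) (cstar a);
  cstar_mul : forall a b, cstar (cmul a b) = cmul (cstar b) (cstar a);
  cnorm_nonneg : forall a, 0 <= cnorm a;
  cnorm_eq0 : forall a, cnorm a = 0 -> a = czero;
  cnorm_scal : forall z a, cnorm (cscal z a) = Cmod z * cnorm a;
  cnorm_triangle : forall a b, cnorm (cadd a b) <= cnorm a + cnorm b;
  cnorm_submult : forall a b, cnorm (cmul a b) <= cnorm a * cnorm b;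
  cnorm_cstar : forall a, cnorm (cmul (cstar a) a) = cnorm a * cnorm a;
  ccomplete : forall u : nat -> ca,
    (forall eps, eps > 0 -> exists N, forall m n, (m >= N)%nat -> (n >= N)%nat ->
        cnorm (cadd (u m) (copp (u n))) < eps) ->
    exists l, forall eps, eps > 0 -> exists N, forall n, (n >= N)%nat ->
        cnorm (cadd (u n) (copp l)) < eps
}.

Definition csub (A : CStarAlgebra) (a b : A) : A := cadd A a (copp A b).

Definition is_metric {X : Type} (d : X -> X -> R) : Prop :=
  (forall x y, 0 <= d x y) /\ (forall x y, d x y = 0 <-> x = y) /\
  (forall x y, d x y = d y x) /\ (forall x y z, d x z <= d x y + d y z).

Definition is_open {X : Type} (d : X -> X -> R) (U : X -> Prop) : Prop :=
  forall x, U x -> exists eps, eps > 0 /\ forall y, d x y < eps -> U y.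

Definition is_compact {X : Type} (d : X -> X -> R) (K : X -> Prop) : Prop :=
  forall (I : Type) (U : I -> X -> Prop),
    (forall i, is_open d (U i)) ->
    (forall x, K x -> exists i, U i x) ->
    exists l : list I, forall x, K x -> exists i, In i l /\ U i x.

Definition in_closure {X : Type} (d : X -> X -> R) (S : X -> Prop) (x : X) : Prop :=
  forall eps, eps > 0 -> exists y, S y /\ d x y < eps.

Definition boundary {X : Type} (d : X -> X -> R) (Y : X -> Prop) (x : X) : Prop :=
  Y x /\ in_closure d (fun y => ~ Y y) x.

Definition locally_compact {X : Type} (d : X -> X -> R) : Prop :=
  forall x, exists K U, is_compact d K /\ is_open d U /\ U x /\ (forall y, U y -> K y).

Definition separable {X : Type} (d : X -> X -> R) : Prop :=
  exists D : nat -> X, forall x, in_closure d (fun y => exists n, y = D n) x.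

Definition complete_metric {X : Type} (d : X -> X -> R) : Prop :=
  forall u : nat -> X,
    (forall eps, eps > 0 -> exists N, forall m n, (m >= N)%nat -> (n >= N)%nat ->
        d (u m) (u n) < eps) ->
    exists l, forall eps, eps > 0 -> exists N, forall n, (n >= N)%nat -> d (u n) l < eps.

(* Polish: separable and completely metrizable (the metric d is only assumed
   compatible, not complete) *)
Definition polish {X : Type} (d : X -> X -> R) : Prop :=
  separable d /\
  exists d' : X -> X -> R, is_metric d' /\ complete_metric d' /\
    (forall U, is_open d U <-> is_open d' U).

Definition continuous_on {X : Type} (d : X -> X -> R) (Y : X -> Prop) (h : X -> X) : Prop :=
  forall x, Y x -> forall eps, eps > 0 -> exists delta, delta > 0 /\
    forall y, Y y -> d x y < delta -> d (h x) (h y) < eps.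

(* h (a map X -> X, of which only the restriction to Y matters) restricts to
   an element of Homeo_∂(Y) *)
Definition homeo_partial {X : Type} (d : X -> X -> R) (Y : X -> Prop) (h : X -> X) : Prop :=
  (forall x, Y x -> Y (h x)) /\
  (exists hinv : X -> X,
     (forall x, Y x -> Y (hinv x)) /\
     (forall x, Y x -> hinv (h x) = x) /\
     (forall x, Y x -> h (hinv x) = x) /\
     continuous_on d Y h /\ continuous_on d Y hinv) /\
  (forall x, boundary d Y x -> h x = x).

Definition glue {X : Type} (Y : nat -> X -> Prop) (phi : nat -> X -> X) (x : X) : X :=
  match excluded_middle_informative (exists n, Y n x) with
  | left H => phi (proj1_sig (constructive_indefinite_description _ H)) x
  | right _ => x
  end.

Definition is_radius {X : Type} (d : X -> X -> R) (Y : X -> Prop) (h : X -> X) (r : R) : Prop :=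
  is_lub (fun t => exists x, Y x /\ t = d x (h x)) r.

Definition in_Cb {X : Type} (d : X -> X -> R) (A : CStarAlgebra) (g : X -> A) : Prop :=
  (forall x eps, eps > 0 -> exists delta, delta > 0 /\
     forall y, d x y < delta -> cnorm A (csub A (g x) (g y)) < eps) /\
  (exists M, forall x, cnorm A (g x) <= M).

Definition in_C0 {X : Type} (d : X -> X -> R) (A : CStarAlgebra) (g : X -> A) : Prop :=
  in_Cb d A g /\
  forall eps, eps > 0 -> exists K, is_compact d K /\
    forall x, ~ K x -> cnorm A (g x) < eps.

Definition in_Df {X : Type} (d : X -> X -> R) (A : CStarAlgebra) (Y : nat -> X -> Prop)
  (f : nat -> nat) (g : X -> A) : Prop :=
  in_Cb d A g /\
  forall eps, eps > 0 -> exists n0, forall n, (n >= n0)%nat ->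
    forall x y, Y n x -> Y n y -> d x y < 1 / INR (f n) ->
      cnorm A (csub A (g x) (g y)) < eps.

(* Main.v *)
Require Import Defs.
From Stdlib Require Import Reals List Lra Lia Classical ClassicalEpsilon.
Open Scope R_scope.

Ltac rcase := unfold Rmax, Rmin, Rabs in *; repeat destruct Rle_dec; repeat destruct Rcase_abs; lra.

Definition contf {X} (d : X -> X -> R) (F : X -> R) : Prop :=
  forall x eps, eps > 0 -> exists delta, delta > 0 /\
    forall y, d x y < delta -> Rabs (F x - F y) < eps.

Lemma cont_const {X} (d : X -> X -> R) c : contf d (fun _ => c).
Proof. intros x eps He. exists 1. split; [lra|]. intros y _.
  replace (c - c) with 0 by ring. rewrite Rabs_R0. lra. Qed.

Lemma cont_lip2 {X} (d : X -> X -> R) F G (h : R -> R -> R) :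
  contf d F -> contf d G ->
  (forall a b c e, Rabs (h a b - h c e) <= Rabs (a - c) + Rabs (b - e)) ->
  contf d (fun z => h (F z) (G z)).
Proof.
  intros HF HG Hh x eps He.
  destruct (HF x (eps/2)) as [d1 [Hd1 H1]]; [lra|].
  destruct (HG x (eps/2)) as [d2 [Hd2 H2]]; [lra|].
  exists (Rmin d1 d2). split. { unfold Rmin; destruct Rle_dec; lra. }
  intros y Hy. eapply Rle_lt_trans; [apply Hh|].
  assert (d x y < d1) by (unfold Rmin in Hy; destruct Rle_dec; lra).
  assert (d x y < d2) by (unfold Rmin in Hy; destruct Rle_dec; lra).
  specialize (H1 y H). specialize (H2 y H0). lra.
Qed.

Lemma cont_plus {X} (d : X -> X -> R) F G : contf d F -> contf d G -> contf d (fun z => F z + G z).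
Proof. intros. apply (cont_lip2 d F G Rplus); auto. intros. rcase. Qed.
Lemma cont_max {X} (d : X -> X -> R) F G : contf d F -> contf d G -> contf d (fun z => Rmax (F z) (G z)).
Proof. intros. apply (cont_lip2 d F G Rmax); auto. intros. rcase. Qed.
Lemma cont_min {X} (d : X -> X -> R) F G : contf d F -> contf d G -> contf d (fun z => Rmin (F z) (G z)).
Proof. intros. apply (cont_lip2 d F G Rmin); auto. intros. rcase. Qed.

Lemma cont_scal {X} (d : X -> X -> R) F c : contf d F -> contf d (fun z => c * F z).
Proof.
  intros HF x eps He.
  assert (Hc : Rabs c + 1 > 0) by (pose proof (Rabs_pos c); lra).
  destruct (HF x (eps / (Rabs c + 1))) as [d1 [Hd1 H1]].
  { apply Rdiv_lt_0_compat; lra. }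
  exists d1. split; auto. intros y Hy. specialize (H1 y Hy).
  replace (c * F x - c * F y) with (c * (F x - F y)) by ring.
  rewrite Rabs_mult.
  assert (Rabs c * Rabs (F x - F y) <= Rabs c * (eps / (Rabs c + 1))).
  { apply Rmult_le_compat_l; [apply Rabs_pos| lra]. }
  assert (Rabs c * (eps / (Rabs c + 1)) < eps).
  { apply Rmult_lt_reg_r with (Rabs c + 1); auto.
    replace (Rabs c * (eps / (Rabs c + 1)) * (Rabs c + 1)) with (Rabs c * eps) by (field; lra).
    lra. }
  lra.
Qed.

Lemma dist_lip {X} (d : X -> X -> R) : is_metric d ->
  forall x y p, Rabs (d x p - d y p) <= d x y.
Proof.
  intros [Hpos [Hz [Hs Ht]]] x y p.
  pose proof (Ht x y p). pose proof (Ht y x p). rewrite (Hs y x) in H0. rcase.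
Qed.

Lemma cont_dist {X} (d : X -> X -> R) p : is_metric d -> contf d (fun z => d z p).
Proof.
  intros Hm x eps He. exists eps. split; auto. intros y Hy.
  pose proof (dist_lip d Hm x y p). lra.
Qed.

Lemma inv_S_pos (n : nat) : 0 < / INR (S n).
Proof. apply Rinv_0_lt_compat. apply lt_0_INR. lia. Qed.

Lemma compact_sep {X} (d : X -> X -> R) (C : X -> Prop) y :
  is_metric d -> is_compact d C -> ~ C y ->
  exists eps, eps > 0 /\ forall z, C z -> d y z >= eps.
Proof.
  intros [Hpos [Hz [Hs Ht]]] Hc Hy.
  destruct (Hc nat (fun j z => d y z > / INR (S j))) as [l Hl].
  - intros j z Hjz. exists (d y z - / INR (S j)). split; [lra|].
    intros w Hw. pose proof (Ht y w z). rewrite (Hs w z) in H. lra.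
  - intros z Cz. assert (z <> y) by (intro; subst; tauto).
    assert (d y z > 0).
    { destruct (Hpos y z); auto. exfalso. apply H. symmetry. apply Hz. auto. }
    destruct (archimed_cor1 (d y z) H0) as [N [HN1 HN2]].
    exists (pred N). replace (S (pred N)) with N by lia. lra.
  - exists (/ INR (S (list_max l))). split; [apply inv_S_pos|].
    intros z Cz. destruct (Hl z Cz) as [j [Hj Hjz]].
    assert (j <= list_max l)%nat.
    { assert (Hle := le_n (list_max l)). apply list_max_le in Hle.
      rewrite Forall_forall in Hle. auto. }
    assert (/ INR (S (list_max l)) <= / INR (S j)).
    { apply Rinv_le_contravar. apply lt_0_INR; lia. apply le_INR; lia. }
    lra.
Qed.

Definition Cm {X} (d : X -> X -> R) (l : list (X * R)) (z : X) : R :=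
  fold_right (fun p acc => Rmax (2 - 2 * d z (fst p) / snd p) acc) 0 l.

Lemma Cm_nonneg {X} d l (z : X) : 0 <= Cm d l z.
Proof. induction l; simpl; [lra|]. unfold Rmax; destruct Rle_dec; lra. Qed.

Lemma Cm_ge1 {X} d l (z : X) p : In p l -> snd p > 0 -> d z (fst p) < snd p / 2 -> 1 <= Cm d l z.
Proof.
  intros Hin Hp Hd. induction l; simpl in *; [tauto|].
  destruct Hin as [->|Hin].
  - assert (2 - 2 * d z (fst p) / snd p > 1).
    { assert (d z (fst p) / snd p < 1/2).
      { apply Rmult_lt_reg_r with (snd p); auto. unfold Rdiv.
        rewrite Rmult_assoc, Rinv_l; lra. }
      unfold Rdiv in *. lra. }
    unfold Rmax; destruct Rle_dec; lra.
  - specialize (IHl Hin). unfold Rmax; destruct Rle_dec; lra.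
Qed.

Lemma Cm_zero {X} d l (z : X) : (forall p, In p l -> snd p > 0 /\ d z (fst p) >= snd p) -> Cm d l z = 0.
Proof.
  intros H. induction l; simpl; auto.
  rewrite IHl by (intros; apply H; simpl; auto).
  destruct (H a) as [H1 H2]; [simpl; auto|].
  assert (d z (fst a) / snd a >= 1).
  { unfold Rdiv. apply Rle_ge. apply Rmult_le_reg_r with (snd a); auto.
    rewrite Rmult_assoc, Rinv_l; lra. }
  unfold Rdiv in *. unfold Rmax; destruct Rle_dec; lra.
Qed.

Lemma Cm_pos {X} d l (z : X) : (forall p, In p l -> snd p > 0) -> 0 < Cm d l z ->
  exists p, In p l /\ d z (fst p) < snd p.
Proof.
  intros H Hc. destruct (classic (exists p, In p l /\ d z (fst p) < snd p)) as [?|Hn]; auto.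
  exfalso. rewrite Cm_zero in Hc; [lra|].
  intros p Hp. split; auto. destruct (Rlt_le_dec (d z (fst p)) (snd p)); [|lra].
  exfalso; apply Hn; eauto.
Qed.

Lemma contf_ext {X} (d : X -> X -> R) F G : (forall z, F z = G z) -> contf d F -> contf d G.
Proof. intros He HF x eps Hep. destruct (HF x eps Hep) as [dl [H1 H2]]. exists dl; split; auto.
  intros y Hy. rewrite <- !He. auto. Qed.

Lemma cont_Cm {X} (d : X -> X -> R) l : is_metric d -> contf d (Cm d l).
Proof.
  intros Hm. induction l as [|p l IH]; simpl.
  - apply (contf_ext d (fun _ => 0)); [intros; reflexivity| apply cont_const].
  - apply (contf_ext d (fun z => Rmax (2 + (- 2 / snd p) * d z (fst p)) (Cm d l z))).
    { intros z. unfold Cm at 2. simpl. f_equal. unfold Rdiv. ring. }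
    apply cont_max; auto. apply cont_plus. apply cont_const. apply cont_scal. apply cont_dist; auto.
Qed.

Lemma my_choice {A B} (P : A -> B -> Prop) : (forall a, exists b, P a b) -> exists f, forall a, P a (f a).
Proof. intros H. exists (fun a => proj1_sig (constructive_indefinite_description _ (H a))).
  intros a. exact (proj2_sig (constructive_indefinite_description _ (H a))). Qed.

Lemma filter_ex {A} (P : A -> Prop) (l : list A) :
  exists l', (forall p, In p l' -> P p) /\ (forall p, In p l -> P p -> In p l').
Proof.
  induction l as [|a l [l' [H1 H2]]].
  - exists nil. simpl. tauto.
  - destruct (classic (P a)).
    + exists (a :: l'). split.
      * intros p [<-|Hp]; auto.
      * intros p [<-|Hp] Hpp; simpl; auto.
    + exists l'. split; auto. intros p [<-|Hp] Hpp; [tauto|auto].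
Qed.

Lemma sep_point {X} (d : X -> X -> R) (Y : nat -> X -> Prop) :
  is_metric d -> locally_compact d -> (forall n, is_compact d (Y n)) ->
  (forall m n, m <> n -> forall x, Y m x -> Y n x -> False) ->
  (forall K, is_compact d K ->
     ~ (forall N, exists n, (n >= N)%nat /\ exists x, Y n x /\ K x)) ->
  forall n y, Y n y -> exists eps, eps > 0 /\ forall m, m <> n -> forall z, Y m z -> d y z >= eps.
Proof.
  intros Hm Hlc Hc Hdj Hlf n y Hy.
  destruct (Hlc y) as [K [U [HK [HU [Uy HUK]]]]].
  destruct (HU y Uy) as [e0 [He0 Hball]].
  assert (HN : exists N, forall m, (m >= N)%nat -> forall z, Y m z -> ~ K z).
  { apply NNPP; intro Hn. apply (Hlf K HK). intro N. apply NNPP; intro Hn2. apply Hn.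
    exists N. intros m Hmn z Hz Kz. apply Hn2. exists m. split; auto. exists z; auto. }
  destruct HN as [N HN].
  assert (Hfin : forall N', exists e, e > 0 /\ forall m, (m < N')%nat -> m <> n ->
            forall z, Y m z -> d y z >= e).
  { induction N' as [|N' [e [He IH]]].
    - exists 1. split; [lra|]. intros; lia.
    - assert (Hem : exists e', e' > 0 /\ (N' <> n -> forall z, Y N' z -> d y z >= e')).
      { destruct (Nat.eq_dec N' n) as [->|Hne].
        - exists 1. split; [lra|]. tauto.
        - destruct (compact_sep d (Y N') y Hm (Hc N')) as [e' [He' H']].
          { intro HY. apply (Hdj N' n Hne y HY Hy). }
          exists e'. split; auto. }
      destruct Hem as [e' [He' H']].
      exists (Rmin e e'). split. { unfold Rmin; destruct Rle_dec; lra. }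
      intros m Hmlt Hmn z Hz. destruct (Nat.eq_dec m N') as [->|Hne].
      + specialize (H' Hmn z Hz). unfold Rmin; destruct Rle_dec; lra.
      + assert (m < N')%nat by lia. specialize (IH m H Hmn z Hz). unfold Rmin; destruct Rle_dec; lra. }
  destruct (Hfin N) as [e [He Hfe]].
  exists (Rmin e0 e). split. { unfold Rmin; destruct Rle_dec; lra. }
  intros m Hmn z Hz. destruct (Nat.lt_ge_cases m N) as [Hlt|Hge].
  - specialize (Hfe m Hlt Hmn z Hz). unfold Rmin; destruct Rle_dec; lra.
  - destruct (Rlt_le_dec (d y z) e0) as [Hlt|Hle].
    + exfalso. apply (HN m Hge z Hz). apply HUK. apply Hball. auto.
    + unfold Rmin; destruct Rle_dec; lra.
Qed.

Definition good {X} (d : X -> X -> R) (Y : nat -> X -> Prop) n (p : X * R) : Prop :=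
  Y n (fst p) /\ snd p > 0 /\ snd p <= / INR (S n) /\
  forall m, m <> n -> forall z, Y m z -> d (fst p) z >= snd p.

Lemma cover_ex {X} (d : X -> X -> R) (Y : nat -> X -> Prop) :
  is_metric d -> locally_compact d -> (forall n, is_compact d (Y n)) ->
  (forall m n, m <> n -> forall x, Y m x -> Y n x -> False) ->
  (forall K, is_compact d K ->
     ~ (forall N, exists n, (n >= N)%nat /\ exists x, Y n x /\ K x)) ->
  forall n, exists l : list (X * R), (forall p, In p l -> good d Y n p) /\
    forall z, Y n z -> exists p, In p l /\ d z (fst p) < snd p / 2.
Proof.
  intros Hm Hlc Hc Hdj Hlf n.
  pose proof Hm as [Hpos [Hz [Hs Ht]]].
  destruct (Hc n (X * R)%type (fun p z => good d Y n p /\ d (fst p) z < snd p / 2)) as [l Hl].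
  - intros p z [Hg Hd]. exists (snd p / 2 - d (fst p) z). split; [lra|].
    intros w Hw. split; auto. pose proof (Ht (fst p) z w). lra.
  - intros z Hzn. destruct (sep_point d Y Hm Hlc Hc Hdj Hlf n z Hzn) as [e [He Hse]].
    exists (z, Rmin e (/ INR (S n))). pose proof (inv_S_pos n).
    assert (d z z = 0) by (apply Hz; auto).
    split; [|cbn [fst snd]; unfold Rmin; destruct Rle_dec; lra].
    unfold good; cbn [fst snd]. split; auto. split; [unfold Rmin; destruct Rle_dec; lra|].
    split; [unfold Rmin; destruct Rle_dec; lra|].
    intros m Hmn w Hw. specialize (Hse m Hmn w Hw). unfold Rmin; destruct Rle_dec; lra.
  - destruct (filter_ex (good d Y n) l) as [l' [H1 H2]].
    exists l'. split; auto. intros z Hzn. destruct (Hl z Hzn) as [p [Hp [Hg Hd]]].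
    exists p. split; auto. rewrite Hs. auto.
Qed.

Fixpoint maxseq {X} (b : nat -> X -> R) (M : nat) (z : X) : R :=
  match M with 0%nat => 0 | S M' => Rmax (maxseq b M' z) (b M' z) end.

Lemma maxseq_nonneg {X} b M (z : X) : 0 <= maxseq b M z.
Proof. induction M; simpl; [lra|]. unfold Rmax; destruct Rle_dec; lra. Qed.

Lemma maxseq_le1 {X} b M (z : X) : (forall k, b k z <= 1) -> maxseq b M z <= 1.
Proof. intros H. induction M; simpl; [lra|]. specialize (H M). unfold Rmax; destruct Rle_dec; lra. Qed.

Lemma maxseq_stable {X} b M (z : X) : (forall k, (k >= M)%nat -> b k z <= 0) ->
  forall M', (M' >= M)%nat -> maxseq b M' z = maxseq b M z.
Proof.
  intros H M' HM. induction HM; auto. simpl. rewrite IHHM.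
  assert (b m z <= 0) by (apply H; lia). pose proof (maxseq_nonneg b M z).
  unfold Rmax; destruct Rle_dec; lra.
Qed.


Lemma maxseq_small {X} b (z : X) : forall M, (forall k, (k < M)%nat -> b k z <= 0) -> maxseq b M z = 0.
Proof.
  induction M; intros H; simpl; auto. rewrite IHM by (intros; apply H; lia).
  assert (b M z <= 0) by (apply H; lia). unfold Rmax; destruct Rle_dec; lra.
Qed.

Lemma maxseq_single {X} b (z : X) k0 : (forall k, k <> k0 -> b k z <= 0) -> 0 <= b k0 z ->
  forall M, (M > k0)%nat -> maxseq b M z = b k0 z.
Proof.
  intros H H0 M HM. induction HM.
  - simpl. rewrite maxseq_small by (intros; apply H; lia).
    unfold Rmax; destruct Rle_dec; lra.
  - simpl. rewrite IHHM. assert (b m z <= 0) by (apply H; lia).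
    unfold Rmax; destruct Rle_dec; lra.
Qed.

Lemma maxseq_cont {X} (d : X -> X -> R) b M : (forall k, contf d (b k)) -> contf d (maxseq b M).
Proof.
  intros Hb. induction M; simpl.
  - apply (contf_ext d (fun _ => 0)); [intros; reflexivity| apply cont_const].
  - apply (cont_max d (maxseq b M) (b M)); auto.
Qed.

Lemma limit_fun {X} (d : X -> X -> R) (b : nat -> X -> R) :
  is_metric d -> (forall k, contf d (b k)) -> (forall k z, 0 <= b k z <= 1) ->
  (forall x, exists e, e > 0 /\ exists M, forall z, d x z < e -> forall k, (k >= M)%nat -> b k z <= 0) ->
  exists H : X -> R, contf d H /\ (forall z, 0 <= H z <= 1) /\
    (forall z M, (forall k, (k >= M)%nat -> b k z <= 0) -> H z = maxseq b M z).
Proof.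
  intros [Hpos [Hz [Hs Ht]]] Hc Hb Hloc.
  assert (Hex : forall z, exists M, forall k, (k >= M)%nat -> b k z <= 0).
  { intros z. destruct (Hloc z) as [e [He [M HM]]]. exists M. apply HM.
    assert (d z z = 0) by (apply Hz; auto). lra. }
  destruct (my_choice _ Hex) as [Mf HMf].
  assert (Heq : forall z M, (forall k, (k >= M)%nat -> b k z <= 0) -> maxseq b (Mf z) z = maxseq b M z).
  { intros z M HM. rewrite <- (maxseq_stable b M z HM (Nat.max M (Mf z))) by lia.
    rewrite (maxseq_stable b (Mf z) z (HMf z) (Nat.max M (Mf z))) by lia. reflexivity. }
  exists (fun z => maxseq b (Mf z) z). split; [|split].
  - intros x eps Heps. destruct (Hloc x) as [e [He [M HM]]].
    destruct (maxseq_cont d b M Hc x eps Heps) as [dl [Hdl Hd]].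
    exists (Rmin e dl). split; [unfold Rmin; destruct Rle_dec; lra|].
    intros y Hy. rewrite (Heq x M), (Heq y M).
    + apply Hd. unfold Rmin in Hy; destruct Rle_dec; lra.
    + apply HM. unfold Rmin in Hy; destruct Rle_dec; lra.
    + apply HM. assert (d x x = 0) by (apply Hz; auto). lra.
  - intros z. split; [apply maxseq_nonneg| apply maxseq_le1; intros; apply Hb].
  - intros z M HM. apply Heq; auto.
Qed.

Lemma Cmod_real t : Cmod (t, 0) = Rabs t.
Proof. unfold Cmod; simpl. replace (t * t + 0 * 0) with (Rsqr t) by (unfold Rsqr; ring).
  apply sqrt_Rsqr_abs. Qed.

Lemma norm_scal (A : CStarAlgebra) (a : A) u : cnorm A (cscal A (u, 0) a) = Rabs u * cnorm A a.
Proof. rewrite cnorm_scal, Cmod_real. reflexivity. Qed.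

Lemma norm_diff (A : CStarAlgebra) (a : A) u v :
  cnorm A (csub A (cscal A (u, 0) a) (cscal A (v, 0) a)) = Rabs (u - v) * cnorm A a.
Proof.
  assert (E : cscal A (u, 0) a = cadd A (cscal A (u - v, 0) a) (cscal A (v, 0) a)).
  { rewrite <- cscal_addl. unfold Cadd; simpl. f_equal. f_equal; ring. }
  unfold csub. rewrite E, <- cadd_assoc, cadd_opp, cadd_0. apply norm_scal.
Qed.

Lemma glue_in {X} (Y : nat -> X -> Prop) phi n x :
  (forall m n, m <> n -> forall x, Y m x -> Y n x -> False) -> Y n x -> glue Y phi x = phi n x.
Proof.
  intros Hdj Hx. unfold glue. destruct excluded_middle_informative as [H|H].
  - destruct (constructive_indefinite_description _ H) as [m Hm]. simpl.
    destruct (Nat.eq_dec m n) as [->|Hne]; auto. exfalso. eapply Hdj; eauto.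
  - exfalso. apply H. eauto.
Qed.

Lemma tent_lip a b D : D > 0 -> Rabs (Rmax 0 (1 - a / D) - Rmax 0 (1 - b / D)) <= Rabs (a - b) / D.
Proof.
  intros HD. assert (Rabs (a - b) / D = Rabs ((1 - b / D) - (1 - a / D))).
  { replace ((1 - b / D) - (1 - a / D)) with ((a - b) / D) by (field; lra).
    unfold Rdiv. rewrite Rabs_mult, (Rabs_right (/ D)); auto. left. apply Rinv_0_lt_compat; auto. }
  rewrite H. unfold Rmax, Rabs; repeat destruct Rle_dec; repeat destruct Rcase_abs; lra.
Qed.

Lemma ratio_bound dd D n : 0 < D -> 0 < n -> dd * n < 2 * D -> dd / D < 2 / n.
Proof.
  intros HD Hn H. unfold Rdiv. apply Rmult_lt_reg_r with (D * n); [nra|].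
  replace (dd * / D * (D * n)) with (dd * n) by (field; lra).
  replace (2 * / n * (D * n)) with (2 * D) by (field; lra). lra.
Qed.

Fixpoint iseq (s : nat -> nat) (k : nat) : nat :=
  match k with 0%nat => s 0%nat | S k' => s (S (iseq s k')) end.

Definition iarg (s : nat -> nat) (k : nat) : nat :=
  match k with 0%nat => 0%nat | S k' => S (iseq s k') end.

Lemma iseq_arg s k : iseq s k = s (iarg s k).
Proof. destruct k; reflexivity. Qed.

Lemma iseq_ge s : (forall N, (s N >= N)%nat) -> forall k, (iseq s k >= k)%nat.
Proof. intros H k. induction k; simpl. specialize (H 0%nat). lia. specialize (H (S (iseq s k))). lia. Qed.

Lemma iseq_lt s : (forall N, (s N >= N)%nat) -> forall i j, (i < j)%nat -> (iseq s i < iseq s j)%nat.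
Proof.
  intros H i j Hij. induction Hij; simpl.
  - specialize (H (S (iseq s i))). lia.
  - specialize (H (S (iseq s m))). lia.
Qed.

Lemma iseq_inj s : (forall N, (s N >= N)%nat) -> forall i j, iseq s i = iseq s j -> i = j.
Proof.
  intros H i j E. destruct (Nat.lt_trichotomy i j) as [Hl|[He|Hl]]; auto.
  - pose proof (iseq_lt s H i j Hl). lia.
  - pose proof (iseq_lt s H j i Hl). lia.
Qed.

Theorem lemma2p4 (X : Type) (d : X -> X -> R) (A : CStarAlgebra)
  (Y : nat -> X -> Prop) (phi : nat -> X -> X) (f : nat -> nat) :
  is_metric d ->
  polish d ->
  locally_compact d ->
  ~ is_compact d (fun _ => True) ->
  (exists a : A, a <> czero A) ->
  (forall n, is_compact d (Y n)) ->
  (forall n, ~ exists l : list X, forall x, Y n x -> In x l) ->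
  (forall m n, m <> n -> forall x, Y m x -> Y n x -> False) ->
  (forall K, is_compact d K ->
     ~ (forall N, exists n, (n >= N)%nat /\ exists x, Y n x /\ K x)) ->
  (forall n, homeo_partial d (Y n) (phi n)) ->
  (forall n, (f n > 0)%nat) ->
  (forall N, exists n, (n >= N)%nat /\
     exists r, is_radius d (Y n) (phi n) r /\ r >= INR n / INR (f n)) ->
  exists g : X -> A,
    in_Df d A Y f g /\
    ~ in_C0 d A (fun x => csub A (g (glue Y phi x)) (g x)).
Proof.
  intros Hm Hpol Hlc Hnc [a Ha] Hc Hinf Hdj Hlf Hhom Hf HR.
  pose proof Hm as [Hpos [Hz [Hs Ht]]].
  set (na := cnorm A a).
  assert (Hna : na > 0).
  { pose proof (cnorm_nonneg A a). destruct (Rle_lt_or_eq_dec _ _ H); auto.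
    exfalso. apply Ha. apply cnorm_eq0. auto. }
  assert (Hsel : forall N, exists p : nat * X, (fst p >= N)%nat /\ (fst p >= 1)%nat /\
            Y (fst p) (snd p) /\
            d (snd p) (phi (fst p) (snd p)) > INR (fst p) / (2 * INR (f (fst p)))).
  { intros N. destruct (HR (Nat.max N 1)) as [n [Hn [r [Hr Hrn]]]].
    assert (Hn0 : INR n > 0) by (apply lt_0_INR; lia).
    assert (Hf0 : INR (f n) > 0) by (apply lt_0_INR; apply Hf).
    assert (Hq : INR n / INR (f n) > 0) by (apply Rdiv_lt_0_compat; auto).
    assert (Hx : exists x, Y n x /\ d x (phi n x) > r / 2).
    { apply NNPP; intro Hno. destruct Hr as [Hub Hlub].
      assert (r <= r / 2).
      { apply Hlub. intros t [x [Hx ->]]. destruct (Rle_dec (d x (phi n x)) (r / 2)); auto.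
        exfalso; apply Hno; exists x; split; auto; lra. }
      lra. }
    destruct Hx as [x [Hx Hdx]]. exists (n, x). cbn [fst snd].
    split; [lia|]. split; [lia|]. split; auto.
    replace (INR n / (2 * INR (f n))) with ((INR n / INR (f n)) / 2) by (field; lra). lra. }
  destruct (my_choice _ Hsel) as [sel Hsel'].
  set (s := fun N => fst (sel N)).
  assert (Hs_ge : forall N, (s N >= N)%nat) by (intros N; apply (Hsel' N)).
  set (nk := iseq s).
  set (xk := fun k => snd (sel (iarg s k))).
  assert (Hnk : forall k, nk k = fst (sel (iarg s k))) by (intros; apply iseq_arg).
  assert (HYk : forall k, Y (nk k) (xk k)) by (intros k; rewrite Hnk; apply Hsel').
  assert (Hnk1 : forall k, (nk k >= 1)%nat) by (intros k; rewrite Hnk; apply Hsel').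
  assert (Hnkk : forall k, (nk k >= k)%nat) by (apply iseq_ge; auto).
  assert (Hinj : forall i j, nk i = nk j -> i = j) by (apply iseq_inj; auto).
  set (D := fun k => d (xk k) (phi (nk k) (xk k))).
  assert (HD : forall k, D k > INR (nk k) / (2 * INR (f (nk k)))).
  { intros k. unfold D. rewrite Hnk. apply Hsel'. }
  assert (HDpos : forall k, D k > 0).
  { intros k. specialize (HD k). assert (INR (nk k) / (2 * INR (f (nk k))) > 0).
    { apply Rdiv_lt_0_compat. apply lt_0_INR; specialize (Hnk1 k); lia.
      assert (INR (f (nk k)) > 0) by (apply lt_0_INR; apply Hf). lra. }
    lra. }
  destruct (my_choice _ (cover_ex d Y Hm Hlc Hc Hdj Hlf)) as [L HL].
  set (tent := fun k z => Rmax 0 (1 - d z (xk k) / D k)).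
  set (bump := fun k z => Rmin (Rmin 1 (Cm d (L (nk k)) z)) (tent k z)).
  assert (Htent01 : forall k z, 0 <= tent k z <= 1).
  { intros k z. unfold tent. assert (0 <= d z (xk k) / D k).
    { unfold Rdiv. apply Rmult_le_pos. apply Hpos. left; apply Rinv_0_lt_compat; apply HDpos. }
    unfold Rmax; destruct Rle_dec; lra. }
  assert (Hb01 : forall k z, 0 <= bump k z <= 1).
  { intros k z. unfold bump. pose proof (Cm_nonneg d (L (nk k)) z). pose proof (Htent01 k z).
    unfold Rmin; repeat destruct Rle_dec; lra. }
  assert (HbY : forall k z, Y (nk k) z -> bump k z = tent k z).
  { intros k z Hzk. unfold bump. destruct (HL (nk k)) as [Hg Hcov].
    destruct (Hcov z Hzk) as [p [Hp Hdp]].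
    assert (1 <= Cm d (L (nk k)) z).
    { apply (Cm_ge1 d _ z p Hp); auto. apply Hg; auto. }
    pose proof (Htent01 k z). unfold Rmin; repeat destruct Rle_dec; lra. }
  assert (HbN : forall k m z, m <> nk k -> Y m z -> bump k z = 0).
  { intros k m z Hmk Hzm. unfold bump. rewrite Cm_zero.
    - pose proof (Htent01 k z). unfold Rmin; repeat destruct Rle_dec; lra.
    - intros p Hp. destruct (HL (nk k)) as [Hg _]. destruct (Hg p Hp) as [_ [H1 [_ H2]]].
      split; auto. rewrite Hs. apply (H2 m Hmk z Hzm). }
  assert (Hbc : forall k, contf d (bump k)).
  { intros k. unfold bump. apply (cont_min d (fun z => Rmin 1 (Cm d (L (nk k)) z)) (tent k)).
    - apply (cont_min d (fun _ => 1) (Cm d (L (nk k)))). apply cont_const. apply cont_Cm; auto.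
    - unfold tent. apply (cont_max d (fun _ => 0) (fun z => 1 - d z (xk k) / D k)). apply cont_const.
      apply (contf_ext d (fun z => 1 + (- / D k) * d z (xk k))).
      { intros z. unfold Rdiv. ring. }
      apply cont_plus. apply cont_const. apply cont_scal. apply cont_dist; auto. }
  assert (Hloc : forall x, exists e, e > 0 /\ exists M, forall z, d x z < e ->
              forall k, (k >= M)%nat -> bump k z <= 0).
  { intros x. destruct (Hlc x) as [K [U [HK [HU [Ux HUK]]]]].
    destruct (HU x Ux) as [e0 [He0 Hball]].
    assert (HN : exists N, forall m, (m >= N)%nat -> forall z, Y m z -> ~ K z).
    { apply NNPP; intro Hn. apply (Hlf K HK). intro N. apply NNPP; intro Hn2. apply Hn.
      exists N. intros m Hmn z Hz' Kz. apply Hn2. exists m. split; auto. exists z; auto. }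
    destruct HN as [N HN].
    destruct (archimed_cor1 (e0 / 2)) as [M0 [HM0 HM0p]]; [lra|].
    exists (e0 / 2). split; [lra|]. exists (Nat.max N M0).
    intros z Hxz k Hk. destruct (Rle_dec (bump k z) 0) as [|Hbp]; auto. exfalso.
    assert (Hcm : 0 < Cm d (L (nk k)) z).
    { unfold bump in Hbp. pose proof (Htent01 k z). unfold Rmin in Hbp; repeat destruct Rle_dec; lra. }
    destruct (HL (nk k)) as [Hg _].
    destruct (Cm_pos d (L (nk k)) z (fun p Hp => proj1 (proj2 (Hg p Hp))) Hcm) as [p [Hp Hdp]].
    destruct (Hg p Hp) as [HYp [_ [Hle _]]].
    assert (/ INR (S (nk k)) <= / INR M0).
    { apply Rinv_le_contravar. apply lt_0_INR; auto. apply le_INR. specialize (Hnkk k). lia. }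
    apply (HN (nk k)) with (fst p); auto. { specialize (Hnkk k). lia. }
    apply HUK. apply Hball. pose proof (Ht x z (fst p)). lra. }
  destruct (limit_fun d bump Hm Hbc Hb01 Hloc) as [H [Hcont [H01 Heq]]].
  assert (HY1 : forall k z, Y (nk k) z -> H z = tent k z).
  { intros k z Hzk. rewrite (Heq z (S k)).
    - rewrite (maxseq_single bump z k).
      + apply HbY; auto.
      + intros j Hj. rewrite (HbN j (nk k) z); [lra| |auto]. intro E. apply Hj. apply Hinj. auto.
      + apply Hb01.
      + lia.
    - intros j Hj. rewrite (HbN j (nk k) z); [lra| |auto]. intro E. apply Hinj in E. lia. }
  assert (HY0 : forall m z, Y m z -> (forall k, nk k <> m) -> H z = 0).
  { intros m z Hzm Hno. rewrite (Heq z 0%nat); [reflexivity|].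
    intros j _. rewrite (HbN j m z); [lra| |auto]. auto. }
  exists (fun z => cscal A (H z, 0) a). split.
  - split; [split|].
    + intros x eps He. destruct (Hcont x (eps / na)) as [dl [Hdl Hd]].
      { apply Rdiv_lt_0_compat; auto. }
      exists dl. split; auto. intros y Hy. rewrite norm_diff. fold na.
      specialize (Hd y Hy). apply Rmult_lt_compat_r with (r := na) in Hd; auto.
      replace (eps / na * na) with eps in Hd by (field; lra). auto.
    + exists na. intros x. rewrite norm_scal. fold na. specialize (H01 x).
      rewrite Rabs_pos_eq by lra. nra.
    + intros eps He. destruct (archimed_cor1 (eps / (2 * na))) as [N0 [HN0 HN0p]].
      { apply Rdiv_lt_0_compat; lra. }
      exists N0. intros n Hn x y Hx Hy Hxy. rewrite norm_diff. fold na.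
      destruct (classic (exists k, nk k = n)) as [[k <-]|Hno].
      * rewrite (HY1 k x Hx), (HY1 k y Hy).
        assert (HnR : INR (nk k) > 0) by (apply lt_0_INR; specialize (Hnk1 k); lia).
        assert (HfR : INR (f (nk k)) > 0) by (apply lt_0_INR; apply Hf).
        assert (Hb1 : Rabs (tent k x - tent k y) <= d x y / D k).
        { eapply Rle_trans. unfold tent. apply tent_lip; apply HDpos. unfold Rdiv. apply Rmult_le_compat_r.
          left; apply Rinv_0_lt_compat; apply HDpos. apply dist_lip; exact Hm. }
        assert (Hb2 : d x y / D k < 2 / INR (nk k)).
        { apply ratio_bound; [apply HDpos|exact HnR|].
          assert (2 * D k > INR (nk k) * (1 / INR (f (nk k)))).
          { specialize (HD k). replace (INR (nk k) * (1 / INR (f (nk k)))) with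
              (2 * (INR (nk k) / (2 * INR (f (nk k))))) by (field; lra). lra. }
          assert (d x y * INR (nk k) < INR (nk k) * (1 / INR (f (nk k)))).
          { rewrite Rmult_comm. apply Rmult_lt_compat_l; auto. }
          lra. }
        assert (Hb3 : 2 / INR (nk k) <= 2 / INR N0).
        { unfold Rdiv. apply Rmult_le_compat_l; [lra|]. apply Rinv_le_contravar.
          apply lt_0_INR; auto. apply le_INR; lia. }
        assert (Hb4 : 2 / INR N0 < eps / na).
        { replace (2 / INR N0) with (2 * / INR N0) by (unfold Rdiv; ring).
          replace (eps / na) with (2 * (eps / (2 * na))) by (field; lra). lra. }
        assert (Rabs (tent k x - tent k y) < eps / na) by lra.
        apply Rmult_lt_compat_r with (r := na) in H0; auto.
        replace (eps / na * na) with eps in H0 by (field; lra). auto.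
      * assert (Hno' : forall k, nk k <> n) by (intros k E; apply Hno; eauto).
        rewrite (HY0 n x Hx Hno'), (HY0 n y Hy Hno').
        replace (0 - 0) with 0 by ring. rewrite Rabs_R0. lra.
  - intros [_ HC]. destruct (HC (na / 2)) as [K [HK Hout]]; [lra|].
    apply (Hlf K HK). intros N. exists (nk N). split; [apply Hnkk|].
    exists (xk N). split; auto. apply NNPP; intro HnK. specialize (Hout _ HnK).
    cbv beta in Hout. rewrite (glue_in Y phi (nk N) (xk N) Hdj (HYk N)) in Hout.
    rewrite norm_diff in Hout. fold na in Hout.
    destruct (Hhom (nk N)) as [Hmap _].
    rewrite (HY1 N _ (Hmap _ (HYk N))), (HY1 N _ (HYk N)) in Hout.
    unfold tent in Hout. rewrite (Hs (phi (nk N) (xk N)) (xk N)) in Hout.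
    fold (D N) in Hout.
    assert (d (xk N) (xk N) = 0) by (apply Hz; auto). rewrite H0 in Hout.
    specialize (HDpos N).
    replace (1 - D N / D N) with 0 in Hout by (field; lra).
    replace (1 - 0 / D N) with 1 in Hout by (field; lra).
    replace (Rmax 0 0 - Rmax 0 1) with (- (1)) in Hout by (unfold Rmax; repeat destruct Rle_dec; lra).
    rewrite Rabs_Ropp, Rabs_R1 in Hout. lra.
Qed.
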